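(* In the ALOHA network described below with a fixed transmit probability $p\in(0,1)$, consider the normalized mean local delay $\frac{\widetilde{D}(p)}{\log_2(1+\theta)}$ as a function of the SINR threshold $\theta>0$, and let $\theta_{\mathrm{opt}}$ denote its minimizer. (i) In the noise-limited regime (interference neglected, i.e. $\widetilde{D}(p)=\frac1p\exp(\theta r_0^\alpha WN_0)$), $$\theta_{\mathrm{opt}}=\exp\left(\mathcal{W}\left(\frac{1}{r_0^{\alpha}WN_0}\right)\right)-1,$$ where $\mathcal{W}$ is the Lambert $\mathcal{W}$ function, i.e. $\mathcal{W}(z)e^{\mathcal{W}(z)}=z$. (ii) In the interference-limited regime (noise neglected, $N_0=0$), $$\theta_{\mathrm{opt}}\in\left(b_0^{-1/(\delta+1)}-1,\ b_0^{-1/\delta}\right),\qquad b_0=\lambda c_d r_0^d\delta C(\delta)p(1-p)^{\delta-1}.$$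
   Context: Model: transmitters form a homogeneous Poisson point process $\Phi$ of intensity $\lambda>0$ in $\mathbb{R}^d$; the typical receiver is at the origin and its desired transmitter $x_0\in\Phi$ is at distance $r_0>0$; probabilities are under the Palm distribution at $x_0$. Time is slotted. Path loss $\kappa r^{-\alpha}$ with $\alpha>d$, $\delta=d/\alpha\in(0,1)$. Power fading coefficients $h_{k,x}$ are i.i.d. exponential with mean $1$ over transmitters and slots, independent of everything. Unit power, always backlogged transmitters. Bandwidth $W$, noise power spectral density $N_r$, $N_0=N_r/\kappa$, SINR threshold $\theta>0$. $c_d$ is the volume of the unit ball in $\mathbb{R}^d$, $C(\delta)=\Gamma(1+\delta)\Gamma(1-\delta)=\frac{\pi\delta}{\sin(\pi\delta)}$. ALOHA with transmit probability $p$: each transmitter (including $x_0$) is independently active in each slot with probability $p$; $\Phi_k$ is the active set in slot $k$; $\mathrm{SINR}_k=\frac{h_{k,x_0}r_0^{-\alpha}}{WN_0+\sum_{x\in\Phi\setminus\{x_0\}}h_{k,x}|x|^{-\alpha}\mathbf{1}(x\in\Phi_k)}$; a slot is successful if $x_0$ is active and $\mathrm{SINR}_k>\theta$; the local delay is the number of slots until the first success and $\widetilde{D}(p)$ (depending on $\theta$) is its mean, which equals $\frac1p\exp\left(\frac{p\lambda c_d r_0^d\theta^\delta C(\delta)}{(1-p)^{1-\delta}}+\theta r_0^\alpha WN_0\right)$. The normalization by $\log_2(1+\theta)$ accounts for slot duration proportional to $1/\log_2(1+\theta)$. *)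

(* Defs.v *)
From Stdlib Require Import Reals Lra.
Open Scope R_scope.

(* Volume c_d of the unit ball in R^d, via the classical recursion
   c_0 = 1, c_1 = 2, c_d = (2 pi / d) c_(d-2)
   (equivalently pi^(d/2) / Gamma(d/2 + 1)). *)
Fixpoint unit_ball_volume (d : nat) : R :=
  match d with
  | O => 1
  | S O => 2
  | S (S k as m) => 2 * PI / INR (S m) * unit_ball_volume k
  end.

(* C(delta) = Gamma(1+delta) Gamma(1-delta) = pi delta / sin(pi delta). *)
Definition Cdelta (delta : R) : R := PI * delta / sin (PI * delta).

Definition mean_local_delay (d : nat) (alpha lam r0 W N0 p theta : R) : R :=
  let delta := INR d / alpha in
  / p * exp (p * lam * unit_ball_volume d * r0 ^ d * Rpower theta delta
               * Cdelta delta / Rpower (1 - p) (1 - delta)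
             + theta * Rpower r0 alpha * W * N0).

Definition normalized_delay (d : nat) (alpha lam r0 W N0 p theta : R) : R :=
  mean_local_delay d alpha lam r0 W N0 p theta / (ln (1 + theta) / ln 2).

Definition is_minimizer (f : R -> R) (t : R) : Prop :=
  0 < t /\ forall theta, 0 < theta -> f t <= f theta.

(* Main.v *)
Require Import Defs.
From Stdlib Require Import Reals Lra Lia.
Open Scope R_scope.

Lemma ln_lt_sub1 x : 0 < x -> x <> 1 -> ln x < x - 1.
Proof.
  intros Hx H1. assert (ln x <> 0).
  { intro E. apply H1. rewrite <- (exp_ln x Hx), E. apply exp_0. }
  pose proof (exp_ineq1 (ln x) H). rewrite exp_ln in H0; lra.
Qed.

Lemma ln_le_sub1 x : 0 < x -> ln x <= x - 1.
Proof.
  intros Hx. pose proof (exp_ineq1_le (ln x)). rewrite exp_ln in H; lra.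
Qed.

Lemma ln_diff_le x y : 0 < x -> 0 < y -> ln y - ln x <= y / x - 1.
Proof.
  intros Hx Hy. replace (ln y - ln x) with (ln (y / x)).
  - apply ln_le_sub1. apply Rdiv_lt_0_compat; lra.
  - unfold Rdiv. rewrite ln_mult, ln_Rinv; try lra. apply Rinv_0_lt_compat; lra.
Qed.

Lemma ln_diff_lt x y : 0 < x -> 0 < y -> y <> x -> ln y - ln x < y / x - 1.
Proof.
  intros Hx Hy Hne. replace (ln y - ln x) with (ln (y / x)).
  - apply ln_lt_sub1. apply Rdiv_lt_0_compat; lra.
    intro E. apply Hne. field_simplify_eq in E; lra.
  - unfold Rdiv. rewrite ln_mult, ln_Rinv; try lra. apply Rinv_0_lt_compat; lra.
Qed.

Lemma ln_le' x y : 0 < x -> x <= y -> ln x <= ln y.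
Proof.
  intros Hx [H|H]. left; apply ln_increasing; auto. subst; lra.
Qed.

Lemma fermat (H : R -> R) t l : 0 < t -> derivable_pt_lim H t l ->
  (forall x, 0 < x -> H t <= H x) -> l = 0.
Proof.
  intros Ht Hd Hm.
  pose (pr := exist _ l Hd : derivable_pt H t).
  change l with (derive_pt H t pr).
  apply (deriv_minimum H 0 (t+1) t pr); try lra.
  intros; apply Hm; lra.
Qed.

Lemma min_transfer (g H : R -> R) c : 0 < c ->
  (forall th, 0 < th -> g th = c * exp (H th)) ->
  forall t, is_minimizer g t <-> is_minimizer H t.
Proof.
  intros Hc Heq t; unfold is_minimizer; split; intros [Ht Hm]; split; auto;
  intros th Hth; specialize (Hm th Hth); rewrite !Heq in * by auto.
  - destruct (Rle_dec (H t) (H th)) as [|n]; auto.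
    assert (exp (H th) < exp (H t)) by (apply exp_increasing; lra).
    assert (c * exp (H th) < c * exp (H t)) by (apply Rmult_lt_compat_l; auto). lra.
  - apply Rmult_le_compat_l; [lra|]. destruct Hm as [Hm|Hm].
    left; apply exp_increasing; auto. rewrite Hm; lra.
Qed.

Lemma ubv_pos : forall n, 0 < unit_ball_volume n /\ 0 < unit_ball_volume (S n).
Proof.
  induction n as [|n [IH1 IH2]].
  - simpl; lra.
  - split; auto. change (unit_ball_volume (S (S n))) with
      (2 * PI / INR (S (S n)) * unit_ball_volume n).
    apply Rmult_lt_0_compat; auto. apply Rdiv_lt_0_compat.
    pose proof PI_RGT_0; lra. apply lt_0_INR; lia.
Qed.

Lemma dl_lnf f t l : 0 < f t -> derivable_pt_lim f t l ->
  derivable_pt_lim (fun x => ln (f x)) t (/ f t * l).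
Proof.
  intros Hp Hd. exact (derivable_pt_lim_comp f ln t l (/ f t) Hd (derivable_pt_lim_ln _ Hp)).
Qed.

Lemma d_ln1p t : -1 < t -> derivable_pt_lim (fun x => ln (1 + x)) t (/ (1 + t)).
Proof.
  intros Ht.
  assert (D : derivable_pt_lim (fun x => 1 + x) t 1).
  { pose proof (derivable_pt_lim_plus (fct_cte 1) id t 0 1 (derivable_pt_lim_const 1 t) (derivable_pt_lim_id t)) as E.
    rewrite Rplus_0_l in E. exact E. }
  pose proof (dl_lnf (fun x => 1 + x) t 1 ltac:(simpl; lra) D). simpl in H.
  rewrite Rmult_1_r in H. exact H.
Qed.

Lemma part1 a w : 0 < a -> w * exp w = / a -> forall t,
  is_minimizer (fun th => a * th - ln (ln (1 + th))) t <-> t = exp w - 1.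
Proof.
  intros Ha Hw.
  assert (Hew : 0 < exp w) by apply exp_pos.
  assert (Hwp : 0 < w).
  { destruct (Rlt_le_dec 0 w); auto.
    assert (0 < / a) by (apply Rinv_0_lt_compat; auto). nra. }
  assert (Haw : a * w * exp w = 1).
  { replace (a * w * exp w) with (a * (w * exp w)) by ring. rewrite Hw. field; lra. }
  set (t0 := exp w - 1).
  assert (Ht0 : 0 < t0).
  { unfold t0. assert (exp 0 < exp w) by (apply exp_increasing; auto). rewrite exp_0 in H; lra. }
  assert (HL0 : ln (1 + t0) = w). { unfold t0. replace (1 + (exp w - 1)) with (exp w) by ring. apply ln_exp. }
  assert (Strict : forall th, 0 < th -> th <> t0 ->
     a * t0 - ln (ln (1 + t0)) < a * th - ln (ln (1 + th))).
  { intros th Hth Hne. rewrite HL0.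
    assert (HL : 0 < ln (1 + th)).
    { rewrite <- ln_1. apply ln_increasing; lra. }
    pose proof (ln_diff_le w (ln (1 + th)) Hwp HL) as S1.
    pose proof (ln_diff_lt (1 + t0) (1 + th) ltac:(lra) ltac:(lra) ltac:(lra)) as S2.
    rewrite HL0 in S2.
    assert (E : (1 + th) / (1 + t0) - 1 = (th - t0) / exp w).
    { unfold t0. field. lra. }
    rewrite E in S2.
    assert (ln (1 + th) / w - 1 = (ln (1 + th) - w) / w) by (field; lra).
    assert ((ln (1 + th) - w) / w < (th - t0) / exp w / w).
    { unfold Rdiv. apply Rmult_lt_compat_r. apply Rinv_0_lt_compat; auto. exact S2. }
    assert ((th - t0) / exp w / w = a * (th - t0)).
    { field_simplify_eq; [|lra]. transitivity ((a * w * exp w) * (th - t0)); [rewrite Haw; ring | ring]. }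
    lra. }
  intros t; unfold is_minimizer; split.
  - intros [Ht Hm]. destruct (Req_dec t t0) as [E|E]; auto.
    specialize (Hm t0 Ht0). specialize (Strict t Ht E). lra.
  - intros ->. split; auto. intros th Hth. destruct (Req_dec th t0) as [E|E].
    subst th; lra. left; apply Strict; auto.
Qed.

Lemma dH2 K d th : 0 < th ->
  derivable_pt_lim (fun x => K * Rpower x d - ln (ln (1 + x))) th
    (K * (d * Rpower th (d - 1)) - / ln (1 + th) * / (1 + th)).
Proof.
  intros Hth.
  assert (HL : 0 < ln (1 + th)) by (rewrite <- ln_1; apply ln_increasing; lra).
  pose proof (derivable_pt_lim_scal (fun x => Rpower x d) K th _ (derivable_pt_lim_power th d Hth)) as A.
  pose proof (dl_lnf (fun x => ln (1 + x)) th _ HL (d_ln1p th ltac:(lra))) as B.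
  exact (derivable_pt_lim_minus _ _ th _ _ A B).
Qed.

Lemma exp_sq y : 0 <= y -> y * y / 4 <= exp y.
Proof.
  intros Hy. replace y with (y/2 + y/2) at 3 by field. rewrite exp_plus.
  pose proof (exp_ineq1_le (y/2)). nra.
Qed.

Lemma part2_exists K d : 0 < K -> 0 < d ->
  exists t, is_minimizer (fun x => K * Rpower x d - ln (ln (1 + x))) t.
Proof.
  intros HK Hd. set (H := fun x => K * Rpower x d - ln (ln (1 + x))).
  set (M := H 1).
  assert (Hln2 : 0 < ln 2 < 1).
  { split. rewrite <- ln_1; apply ln_increasing; lra. pose proof (ln_lt_sub1 2 ltac:(lra) ltac:(lra)); lra. }
  set (a := exp (- (Rabs M + 1))).
  assert (Ha : 0 < a < 1).
  { split. apply exp_pos. unfold a.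
    assert (exp (-(Rabs M + 1)) < exp 0) by (apply exp_increasing; pose proof (Rabs_pos M); lra).
    rewrite exp_0 in H0; exact H0. }
  assert (Small : forall th, 0 < th -> th <= a -> M <= H th).
  { intros th Hth Hta. unfold H.
    assert (0 < Rpower th d) by (unfold Rpower; apply exp_pos).
    assert (HL : 0 < ln (1 + th)) by (rewrite <- ln_1; apply ln_increasing; lra).
    assert (ln (ln (1 + th)) <= ln th).
    { apply ln_le'; auto. pose proof (ln_le_sub1 (1 + th)); lra. }
    assert (ln th <= ln a) by (apply ln_le'; auto).
    unfold a in H2; rewrite ln_exp in H2.
    pose proof (Rle_abs M). nra. }
  set (c := K * (d * d) / 4).
  assert (Hc : 0 < c) by (unfold c; apply Rdiv_lt_0_compat; [apply Rmult_lt_0_compat; nra|lra]).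
  set (U := Rmax 1 ((Rabs M + 2) / c)).
  assert (HU1 : 1 <= U) by apply Rmax_l.
  assert (HU2 : Rabs M + 2 <= c * U).
  { pose proof (Rmax_r 1 ((Rabs M + 2) / c)). fold U in H0.
    apply Rmult_le_compat_l with (r := c) in H0; [|lra].
    replace (c * ((Rabs M + 2) / c)) with (Rabs M + 2) in H0 by (field; lra). lra. }
  set (b := exp (U + 1) - 1).
  assert (Hb : 2 <= b) by (unfold b; pose proof (exp_ineq1_le (U + 1)); lra).
  assert (Large : forall th, b <= th -> M <= H th).
  { intros th Hth. unfold H.
    set (s := ln (1 + th)).
    assert (Hs : U + 1 <= s).
    { unfold s. rewrite <- (ln_exp (U + 1)). apply ln_le'. apply exp_pos. unfold b in Hth; lra. }
    assert (Hlt : s - ln 2 <= ln th).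
    { unfold s. assert (ln (1 + th) <= ln (2 * th)) by (apply ln_le'; lra).
      rewrite ln_mult in H0; lra. }
    set (u := s - ln 2).
    assert (Hu : U <= u) by (unfold u; lra).
    set (y := d * ln th).
    assert (Eu : u = s - ln 2) by reflexivity.
    assert (Hy : d * u <= y) by (unfold y; apply Rmult_le_compat_l; lra).
    assert (Hy0 : 0 <= d * u) by nra.
    assert (Rpower th d = exp y) by (unfold Rpower, y; ring_simplify; reflexivity).
    rewrite H0.
    pose proof (exp_sq y ltac:(lra)) as E.
    assert (Hyy : (d * u) * (d * u) <= y * y) by nra.
    assert (Hlns : ln s <= s) by (pose proof (ln_le_sub1 s ltac:(lra)); lra).
    assert (K * exp y >= c * u * u) by (unfold c; nra).
    assert (Hcu : c * U <= c * u) by (apply Rmult_le_compat_l; lra).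
    assert (c * u * u >= u * (Rabs M + 2)) by (pose proof (Rmult_le_pos u (c * u - (Rabs M + 2)) ltac:(lra) ltac:(lra)); nra).
    pose proof (Rle_abs M). pose proof (Rmult_le_pos (u - 1) (Rabs M + 1) ltac:(lra) ltac:(pose proof (Rabs_pos M); lra)). nra. }
  assert (Hab : a <= b) by lra.
  destruct (continuity_ab_min H a b Hab) as [m [Hm1 Hm2]].
  { intros x Hx. apply derivable_continuous_pt. exists (K * (d * Rpower x (d - 1)) - / ln (1 + x) * / (1 + x)).
    apply dH2; lra. }
  assert (HM : H m <= M) by (apply Hm1; lra).
  exists m. split; [lra|]. intros th Hth.
  destruct (Rle_dec th a). pose proof (Small th Hth r); lra.
  destruct (Rle_dec b th). pose proof (Large th r); lra.
  apply Hm1; lra.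
Qed.

Lemma part2_bounds K d t : 0 < K -> 0 < d ->
  is_minimizer (fun x => K * Rpower x d - ln (ln (1 + x))) t ->
  Rpower (K * d) (- / (d + 1)) - 1 < t /\ t < Rpower (K * d) (- / d).
Proof.
  intros HK Hd [Ht Hm].
  pose proof (fermat _ t _ Ht (dH2 K d t Ht) Hm) as F.
  set (q := Rpower t (d - 1)) in *.
  assert (Hq : 0 < q) by (unfold q, Rpower; apply exp_pos).
  set (L := ln (1 + t)) in *.
  assert (HL1 : L < t) by (unfold L; pose proof (ln_lt_sub1 (1 + t) ltac:(lra) ltac:(lra)); lra).
  assert (HL2 : t < L * (1 + t)).
  { unfold L. pose proof (ln_lt_sub1 (/ (1 + t))) as E.
    rewrite ln_Rinv in E by lra.
    assert (/ (1 + t) < 1).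
    { apply Rmult_lt_reg_l with (1 + t); [lra|]. rewrite Rinv_r by lra. lra. }
    assert (0 < / (1 + t)) by (apply Rinv_0_lt_compat; lra).
    specialize (E H0 ltac:(lra)).
    assert (ln (1 + t) > 1 - / (1 + t)) by lra.
    apply Rmult_gt_compat_r with (r := 1 + t) in H1; [|lra].
    replace ((1 - / (1 + t)) * (1 + t)) with t in H1 by (field; lra). lra. }
  assert (HLp : 0 < L) by (unfold L; rewrite <- ln_1; apply ln_increasing; lra).
  set (B := K * d).
  assert (HB : 0 < B) by (unfold B; nra).
  assert (Eq : B * q * L * (1 + t) = 1).
  { unfold B. assert (K * (d * q) = / L * / (1 + t)) by lra.
    replace (K * d * q * L * (1 + t)) with ((K * (d * q)) * L * (1 + t)) by ring.
    rewrite H. field; lra. }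
  assert (Et : Rpower t d = q * t).
  { unfold q. replace d with ((d - 1) + 1) at 1 by ring. rewrite Rpower_plus, Rpower_1; auto. }
  assert (Lq : ln q = (d - 1) * ln t) by (unfold q; apply ln_Rpower).
  split.
  - assert (1 < B * Rpower (1 + t) d * (1 + t)).
    { assert (Rpower t d < Rpower (1 + t) d) by (apply Rlt_Rpower_l; lra).
      assert (B * q * L * (1 + t) < B * q * t * (1 + t)).
      { apply Rmult_lt_compat_r; [lra|]. apply Rmult_lt_compat_l; [nra|lra]. }
      assert (B * Rpower t d * (1 + t) < B * Rpower (1 + t) d * (1 + t)).
      { apply Rmult_lt_compat_r; [lra|]. apply Rmult_lt_compat_l; lra. }
      rewrite Et in H1. nra. }
    assert (0 < ln (B * Rpower (1 + t) d * (1 + t))).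
    { rewrite <- ln_1. apply ln_increasing; lra. }
    assert (0 < Rpower (1 + t) d) by (unfold Rpower; apply exp_pos).
    rewrite !ln_mult, ln_Rpower in H0 by nra. fold L in H0.
    assert (Rpower B (- / (d + 1)) < 1 + t).
    { apply ln_lt_inv. unfold Rpower; apply exp_pos. lra.
      rewrite ln_Rpower. fold L.
      apply Rmult_lt_reg_l with (d + 1); [lra|].
      replace ((d + 1) * (- / (d + 1) * ln B)) with (- ln B) by (field; lra). lra. }
    lra.
  - assert (B * q * t < 1).
    { rewrite <- Eq. replace (B * q * L * (1 + t)) with (B * q * (L * (1 + t))) by ring.
      apply Rmult_lt_compat_l; [nra|lra]. }
    assert (ln (B * q * t) < 0).
    { rewrite <- ln_1. apply ln_increasing; [|lra]. nra. }
    rewrite !ln_mult, Lq in H0 by nra.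
    apply ln_lt_inv; auto. unfold Rpower; apply exp_pos.
    rewrite ln_Rpower.
    apply Rmult_lt_reg_l with d; [lra|].
    replace (d * (- / d * ln B)) with (- ln B) by (field; lra). lra.
Qed.

Lemma nd_eq p E L : 0 < p -> 0 < L ->
  (/ p * exp E) / (L / ln 2) = ln 2 / p * exp (E - ln L).
Proof.
  intros Hp HL. unfold Rminus. rewrite exp_plus, exp_Ropp, exp_ln by auto.
  assert (0 < ln 2) by (rewrite <- ln_1; apply ln_increasing; lra).
  field; repeat split; lra.
Qed.

Theorem theorem8 :
  forall (d : nat) (alpha lam r0 W Nr kappa p : R),
    (1 <= d)%nat -> INR d < alpha ->
    0 < lam -> 0 < r0 -> 0 < W -> 0 < Nr -> 0 < kappa -> 0 < p < 1 ->
    (forall w : R, w * exp w = / (Rpower r0 alpha * W * (Nr / kappa)) ->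
       forall t : R,
         is_minimizer (normalized_delay d alpha 0 r0 W (Nr / kappa) p) t
         <-> t = exp w - 1)
    /\
    (let delta := INR d / alpha in
     let b0 := lam * unit_ball_volume d * r0 ^ d * delta * Cdelta delta * p
               * Rpower (1 - p) (delta - 1) in
     (exists t, is_minimizer (normalized_delay d alpha lam r0 W 0 p) t) /\
     forall t : R,
       is_minimizer (normalized_delay d alpha lam r0 W 0 p) t ->
       Rpower b0 (- / (delta + 1)) - 1 < t /\ t < Rpower b0 (- / delta)).
Proof.
  intros d alpha lam r0 W Nr kappa p Hd Hda Hlam Hr0 HW HNr Hk Hp.
  assert (Hd1 : 1 <= INR d) by (apply (le_INR 1 d) in Hd; simpl in Hd; lra).
  assert (Hal : 0 < alpha) by lra.
  assert (Hc : 0 < ln 2 / p).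
  { apply Rdiv_lt_0_compat; [|lra]. rewrite <- ln_1; apply ln_increasing; lra. }
  split.
  - intros w Hw t.
    set (a := Rpower r0 alpha * W * (Nr / kappa)) in *.
    assert (Ha : 0 < a).
    { unfold a. apply Rmult_lt_0_compat. apply Rmult_lt_0_compat; auto.
      unfold Rpower; apply exp_pos. apply Rdiv_lt_0_compat; auto. }
    rewrite (min_transfer _ (fun th => a * th - ln (ln (1 + th))) (ln 2 / p) Hc).
    + apply part1; auto.
    + intros th Hth. unfold normalized_delay, mean_local_delay. cbv zeta.
      rewrite nd_eq; [| lra | rewrite <- ln_1; apply ln_increasing; lra].
      match goal with |- _ * exp (?X - _) = _ * exp (?Y - _) =>
        replace X with Y by (unfold a, Rdiv; ring) end.
      reflexivity.
  - cbv zeta. set (dl := INR d / alpha).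
    assert (Hdl : 0 < dl < 1).
    { unfold dl. split. apply Rdiv_lt_0_compat; lra.
      apply Rmult_lt_reg_r with alpha; [lra|]. unfold Rdiv. rewrite Rmult_assoc, Rinv_l; lra. }
    set (K := p * lam * unit_ball_volume d * r0 ^ d * Cdelta dl / Rpower (1 - p) (1 - dl)).
    assert (HCd : 0 < Cdelta dl).
    { unfold Cdelta. pose proof PI_RGT_0. apply Rdiv_lt_0_compat. nra.
      apply sin_gt_0; nra. }
    assert (HK : 0 < K).
    { unfold K. apply Rdiv_lt_0_compat; [|unfold Rpower; apply exp_pos].
      pose proof (proj1 (ubv_pos d)). pose proof (pow_lt r0 d Hr0).
      apply Rmult_lt_0_compat; [|exact HCd]. apply Rmult_lt_0_compat; [|exact H0]. apply Rmult_lt_0_compat; [|exact H]. apply Rmult_lt_0_compat; lra. }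
    assert (Hb0 : lam * unit_ball_volume d * r0 ^ d * dl * Cdelta dl * p * Rpower (1 - p) (dl - 1) = K * dl).
    { replace (dl - 1) with (- (1 - dl)) by ring. rewrite Rpower_Ropp. unfold K, Rdiv. ring. }
    rewrite Hb0.
    assert (Tr : forall t, is_minimizer (normalized_delay d alpha lam r0 W 0 p) t <->
               is_minimizer (fun x => K * Rpower x dl - ln (ln (1 + x))) t).
    { apply (min_transfer _ _ (ln 2 / p) Hc). intros th Hth. unfold normalized_delay, mean_local_delay. cbv zeta.
      fold dl.
      rewrite nd_eq; [| lra | rewrite <- ln_1; apply ln_increasing; lra].
      match goal with |- _ * exp (?X - _) = _ * exp (?Y - _) =>
        replace X with Y by (unfold K, Rdiv; ring) end.
      reflexivity. }
    split.
    + destruct (part2_exists K dl HK ltac:(lra)) as [t Ht]. exists t. apply Tr; auto.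
    + intros t Ht. apply part2_bounds; auto. lra. apply Tr; auto.
Qed.
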